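(* Let $n\ge1$, let $f:\{0,1\}^n\to\{0,1\}^n$ be a Boolean model, and let $h$ be a multivalued refinement of $f$ on $X=\prod_{j=1}^n\{0,1,\dots,m_j\}$ built by the threshold construction described in the context. Let $J=\{j: m_j>1\}$ and suppose no component $g_j$ with $j\in J$ is self-inhibited. For a Boolean state $\omega$, let $\omega'\in X$ be obtained from $\omega$ by replacing, for each $j\in J$, the coordinate $\omega_j$ by $m_j$ whenever $\omega_j=1$. (1) If $\omega$ is a fixed point of $f$, then $\omega'$ is a fixed point of $h$; moreover every fixed point of $h$ is of the form $\omega'$ for some fixed point $\omega$ of $f$. (2) If the attractors of the asynchronous dynamics of $f$ are exactly $l$ fixed points $\omega^{(1)},\dots,\omega^{(l)}$, then $\omega'^{(1)},\dots,\omega'^{(l)}$ are the only attractors of the asynchronous dynamics of $h$.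
   Context: Asynchronous dynamics of a map $h:X\to X$ ($X=\prod_j\{0,\dots,m_j\}$, $h_j(x)-x_j\in\{-1,0,1\}$): a transition $x\to y$ exists if there is $i_0$ with $x_{i_0}\neq h_{i_0}(x)$, $y_{i_0}=x_{i_0}+\mathrm{sign}(h_{i_0}(x)-x_{i_0})$, $y_j=x_j$ otherwise. The attractors are the terminal strongly connected components of this state transition graph; a fixed point is a state $x$ with $h(x)=x$. For $x\in X$, $\alpha(x)=\{x'\in\{0,1\}^n:\forall j,\ (x_j=0\Rightarrow x'_j=0),(x_j=m_j\Rightarrow x'_j=1)\}$. A multivalued model $h$ is a refinement of $f$ if for all $x\in X$, $j$: $h_j(x)<x_j\Rightarrow\exists x'\in\alpha(x), f_j(x')<x'_j$ and $h_j(x)>x_j\Rightarrow\exists x'\in\alpha(x), f_j(x')>x'_j$. Threshold construction: write each $f_{j_0}$ in a shortest disjunctive normal form of literals $x_j$ or $\neg x_j$; for each literal whose variable $j$ has $m_j>1$, choose $s\in\{0,\dots,m_j-1\}$ and replace $x_j$ by $x_j\ge s+1$, $\neg x_j$ by $x_j<s+1$; set $\mathcal H_{j_0}(x)=+1$ if the resulting formula is true at $x\in X$ and $-1$ otherwise, and $h_j(x)=\max(0,\min(m_j,x_j+\mathcal H_j(x)))$. Component $g_j$ is self-inhibited if $\neg x_j$ occurs in the shortest DNF of $f_j$. *)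

(* Defs.v *)
From Stdlib Require Import Relations.
From mathcomp Require Import all_boot.
Set Implicit Arguments. Unset Strict Implicit. Unset Printing Implicit Defensive.

Definition bstate (n : nat) := {ffun 'I_n -> bool}.
Definition mstate (n : nat) := {ffun 'I_n -> nat}.

Definition inX (n : nat) (m : 'I_n -> nat) (x : mstate n) : Prop :=
  forall j, x j <= m j.

(* A literal: (variable j, polarity); true = x_j, false = ~ x_j. *)
Definition lit (n : nat) := ('I_n * bool)%type.
Definition dnf (n : nat) := seq (seq (lit n)).

Definition lit_eval (n : nat) (w : bstate n) (l : lit n) : bool :=
  if l.2 then w l.1 else ~~ w l.1.
Definition dnf_eval (n : nat) (w : bstate n) (D : dnf n) : bool :=
  has (all (lit_eval w)) D.

Definition is_dnf_of (n : nat) (f : bstate n -> bstate n) (j : 'I_n) (D : dnf n) :=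
  forall w, f w j = dnf_eval w D.

Definition dnf_size (n : nat) (D : dnf n) : nat := sumn (map size D).

Definition shortest_dnf_of (n : nat) (f : bstate n -> bstate n) (j : 'I_n) (D : dnf n) :=
  is_dnf_of f j D /\ forall D', is_dnf_of f j D' -> dnf_size D <= dnf_size D'.

(* component j is self-inhibited: ~x_j occurs in the (chosen) shortest DNF of f_j *)
Definition self_inhibited (n : nat) (D : 'I_n -> dnf n) (j : 'I_n) : Prop :=
  has (fun c => (j, false) \in c) (D j).

(* thresholded literal ((j, polarity), s): x_j >= s+1, resp. x_j < s+1 *)
Definition tlit (n : nat) := (('I_n * bool) * nat)%type.
Definition tdnf (n : nat) := seq (seq (tlit n)).

Definition forget (n : nat) (T : tdnf n) : dnf n := map (map (fun l => l.1)) T.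

Definition tlit_eval (n : nat) (x : mstate n) (l : tlit n) : bool :=
  if l.1.2 then l.2.+1 <= x l.1.1 else x l.1.1 < l.2.+1.
Definition tdnf_eval (n : nat) (x : mstate n) (T : tdnf n) : bool :=
  has (all (tlit_eval x)) T.

(* admissible thresholds: s in {0..m_j-1} if m_j > 1; literal unchanged
   (i.e. s = 0, as x_j >= 1 <-> x_j = 1 on {0,1}) if m_j = 1 *)
Definition thresholds_ok (n : nat) (m : 'I_n -> nat) (T : 'I_n -> tdnf n) : Prop :=
  forall j c l, c \in T j -> l \in c ->
    if 1 < m l.1.1 then l.2 < m l.1.1 else l.2 == 0.

(* h_j(x) = max(0, min(m_j, x_j + H_j(x))), H_j = +1 if formula true else -1
   (nat truncated subtraction realises the max with 0) *)
Definition hmap (n : nat) (m : 'I_n -> nat) (T : 'I_n -> tdnf n) (x : mstate n)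
  : mstate n :=
  [ffun j => if tdnf_eval x (T j) then minn (m j) (x j).+1
             else minn (m j) (x j).-1].

Definition bstep (n : nat) (f : bstate n -> bstate n) (x y : bstate n) : Prop :=
  exists i, x i != f x i /\ y i = f x i /\ forall j, j != i -> y j = x j.

Definition mstep (n : nat) (h : mstate n -> mstate n) (x y : mstate n) : Prop :=
  exists i, x i != h x i /\
    y i = (if x i < h x i then (x i).+1 else (x i).-1) /\
    forall j, j != i -> y j = x j.

(* attractor = terminal strongly connected component of the state transition
   graph restricted to the state space dom *)
Definition attractor (S : Type) (dom : S -> Prop) (step : S -> S -> Prop)
  (A : S -> Prop) : Prop :=
  (exists x, A x) /\ (forall x, A x -> dom x) /\
  (forall x y, A x -> A y -> clos_refl_trans S step x y) /\
  (forall x y, A x -> clos_refl_trans S step x y -> A y).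

Definition lift_state (n : nat) (m : 'I_n -> nat) (w : bstate n) : mstate n :=
  [ffun j => if (1 < m j) && w j then m j else nat_of_bool (w j)].

(* Main.v *)
Require Import Defs.
From Stdlib Require Import Relations ClassicalEpsilon Classical.
From mathcomp Require Import all_boot.
From mathcomp Require Import zify.
Set Implicit Arguments. Unset Strict Implicit. Unset Printing Implicit Defensive.

Definition setj (n : nat) (x : mstate n) (j : 'I_n) (v : nat) : mstate n :=
  [ffun k => if k == j then v else x k].

Lemma lift_lit (n : nat) (m : 'I_n -> nat) (w : bstate n) (l : tlit n) :
  (if 1 < m l.1.1 then l.2 < m l.1.1 else l.2 == 0) ->
  tlit_eval (lift_state m w) l = lit_eval w l.1.
Proof.
case: l => [[k p] s] /=; rewrite /tlit_eval /lit_eval /= ffunE.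
case: (ltnP 1 (m k)) => Hm H.
  case: p; case: (w k) => /=; lia.
move/eqP: H => ->; case: p; case: (w k) => /=; rewrite ?andbF; lia.
Qed.

Lemma lift_eval (n : nat) (f : bstate n -> bstate n) (m : 'I_n -> nat)
  (D : 'I_n -> dnf n) (hD : forall j, shortest_dnf_of f j (D j))
  (T : 'I_n -> tdnf n) (hTD : forall j, forget (T j) = D j)
  (hT : thresholds_ok m T) w j :
  tdnf_eval (lift_state m w) (T j) = f w j.
Proof.
rewrite (proj1 (hD j) w) -hTD /dnf_eval /forget /tdnf_eval has_map.
apply: eq_in_has => c Hc /=; rewrite all_map; apply: eq_in_all => l Hl /=.
exact: lift_lit (hT j c l Hc Hl).
Qed.

Lemma mono (n : nat)
  (D : 'I_n -> dnf n) (T : 'I_n -> tdnf n) (hTD : forall j, forget (T j) = D j)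
  j (hsi : ~ self_inhibited D j) (x y : mstate n) :
  (forall k, k != j -> x k = y k) -> x j <= y j ->
  tdnf_eval x (T j) -> tdnf_eval y (T j).
Proof.
move=> Hxy Hle /hasP [c Hc Hall]; apply/hasP; exists c => //.
apply/allP => l Hl; move/allP: Hall => /(_ l Hl).
case: l Hl => [[k p] s] Hl; rewrite /tlit_eval /=.
case: (eqVneq k j) => [Ekj|Nkj]; last by rewrite Hxy.
subst k; case: p Hl => Hl; first by move=> H; apply: leq_trans H Hle.
exfalso; apply: hsi; rewrite /self_inhibited -hTD /forget has_map.
apply/hasP; exists c => //=; apply/mapP; by exists (j, false, s).
Qed.

Lemma setjE (n : nat) (x : mstate n) j v k :
  setj x j v k = if k == j then v else x k.
Proof. by rewrite ffunE. Qed.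

Lemma setj_id (n : nat) (x : mstate n) j : setj x j (x j) = x.
Proof. by apply/ffunP => k; rewrite setjE; case: eqP => [->|]. Qed.

Lemma setjj (n : nat) (x : mstate n) j a b : setj (setj x j a) j b = setj x j b.
Proof. by apply/ffunP => k; rewrite !setjE; case: eqP. Qed.

Lemma setj_inX (n : nat) (m : 'I_n -> nat) (x : mstate n) j v :
  inX m x -> v <= m j -> inX m (setj x j v).
Proof. by move=> H Hv k; rewrite setjE; case: eqP => [->|]. Qed.

Lemma step_setj (n : nat) (m : 'I_n -> nat) (T : 'I_n -> tdnf n) (x : mstate n) j :
  inX m x ->
  (tdnf_eval x (T j) /\ x j < m j \/ ~~ tdnf_eval x (T j) /\ 0 < x j) ->
  mstep (hmap m T) x (setj x j (if tdnf_eval x (T j) then (x j).+1 else (x j).-1)).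
Proof.
move=> HX H; exists j; rewrite !setjE eqxx ffunE.
have Hj := HX j.
split; last split; last by move=> k /negbTE Hk; rewrite setjE Hk.
  case: H => [[-> Hlt]|[Hf Hp]]; last rewrite (negbTE Hf); lia.
case: H => [[-> Hlt]|[Hf Hp]].
  have -> : minn (m j) (x j).+1 = (x j).+1 by lia.
  by rewrite ltnSn.
rewrite (negbTE Hf).
have -> : minn (m j) (x j).-1 = (x j).-1 by lia.
have -> : (x j < (x j).-1) = false by lia.
by [].
Qed.

Lemma push_up (n : nat) (m : 'I_n -> nat)
  (D : 'I_n -> dnf n) (T : 'I_n -> tdnf n) (hTD : forall j, forget (T j) = D j)
  (hnsi : forall j, 1 < m j -> ~ self_inhibited D j) j :
  forall x : mstate n, inX m x -> tdnf_eval x (T j) ->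
  clos_refl_trans _ (mstep (hmap m T)) x (setj x j (m j)).
Proof.
move=> x; move Ed: (m j - x j) => d; elim: d x Ed => [|d IH] x Ed HX Ht.
  have -> : m j = x j by have := HX j; lia.
  rewrite setj_id; exact: rt_refl.
have Hlt : x j < m j by lia.
have Hs := step_setj HX (or_introl (conj Ht Hlt)); rewrite Ht in Hs.
apply: rt_trans (rt_step _ _ _ _ Hs) _.
rewrite -(setjj x j (x j).+1 (m j)).
case: (eqVneq (x j).+1 (m j)) => [<-|Hne].
  rewrite setjj; exact: rt_refl.
apply: IH.
- rewrite setjE eqxx; lia.
- apply: setj_inX => //.
- have Hm1 : 1 < m j by lia.
  apply: (mono hTD (hnsi j Hm1) _ _ Ht).
  + by move=> k Hk; rewrite setjE (negbTE Hk).
  + rewrite setjE eqxx; lia.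
Qed.

Lemma push_down (n : nat) (m : 'I_n -> nat)
  (D : 'I_n -> dnf n) (T : 'I_n -> tdnf n) (hTD : forall j, forget (T j) = D j)
  (hnsi : forall j, 1 < m j -> ~ self_inhibited D j) j :
  forall x : mstate n, inX m x -> ~~ tdnf_eval x (T j) ->
  clos_refl_trans _ (mstep (hmap m T)) x (setj x j 0).
Proof.
move=> x; move Ed: (x j) => d; elim: d x Ed => [|d IH] x Ed HX Ht.
  rewrite -Ed setj_id; exact: rt_refl.
have Hs := step_setj HX (or_intror (conj Ht (ltac:(lia) : 0 < x j))).
rewrite (negbTE Ht) in Hs.
apply: rt_trans (rt_step _ _ _ _ Hs) _.
rewrite -(setjj x j (x j).-1 0).
case: (eqVneq (x j).-1 0) => [<-|Hne].
  rewrite setjj; exact: rt_refl.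
apply: IH.
- rewrite setjE eqxx; lia.
- apply: setj_inX => //; have := HX j; lia.
- apply/negP => Ht'; move/negP: Ht; apply.
  have Hm1 : 1 < m j by have := HX j; lia.
  apply: (mono hTD (hnsi j Hm1) _ _ Ht').
  + by move=> k Hk; rewrite setjE (negbTE Hk).
  + rewrite setjE eqxx; lia.
Qed.

Lemma lift_extreme (n : nat) (m : 'I_n -> nat) (hm : forall j, 0 < m j) (x : mstate n) :
  (forall k, (x k == 0) || (x k == m k)) -> x = lift_state m [ffun k => x k != 0].
Proof.
move=> H; apply/ffunP => k; rewrite !ffunE.
have := H k; have := hm k; case: (eqVneq (x k) 0) => /= E; rewrite ?andbF ?andbT //= => Hm /eqP Ex; case: ltnP; lia.
Qed.

Lemma lift_inX (n : nat) (m : 'I_n -> nat) (hm : forall j, 0 < m j) (w : bstate n) :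
  inX m (lift_state m w).
Proof. move=> k; rewrite ffunE; have := hm k; case: (w k); rewrite /= ?andbT ?andbF //; by case: (ltnP 1 (m k)). Qed.

Lemma fix_rt (n : nat) (h : mstate n -> mstate n) (z y : mstate n) :
  h z = z -> clos_refl_trans _ (mstep h) z y -> y = z.
Proof.
move=> Hz Hr; move: Hr Hz; elim => [x y0 [i [Hi _]]|x|x y0 u _ IH1 _ IH2] Hx //.
  by rewrite Hx eqxx in Hi.
have E := IH1 Hx; subst y0; exact: IH2.
Qed.

Lemma fix_lift (n : nat) (f : bstate n -> bstate n) (m : 'I_n -> nat) (hm : forall j, 0 < m j)
  (D : 'I_n -> dnf n) (hD : forall j, shortest_dnf_of f j (D j))
  (T : 'I_n -> tdnf n) (hTD : forall j, forget (T j) = D j)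
  (hT : thresholds_ok m T) w :
  f w = w -> hmap m T (lift_state m w) = lift_state m w.
Proof.
move=> Hf; apply/ffunP => j; rewrite ffunE (lift_eval hD hTD hT) Hf !ffunE.
have := hm j; case: (w j); rewrite /= ?andbT ?andbF; case: (ltnP 1 (m j)); lia.
Qed.

Lemma fix_inv (n : nat) (f : bstate n -> bstate n) (m : 'I_n -> nat) (hm : forall j, 0 < m j)
  (D : 'I_n -> dnf n) (hD : forall j, shortest_dnf_of f j (D j))
  (T : 'I_n -> tdnf n) (hTD : forall j, forget (T j) = D j)
  (hT : thresholds_ok m T) x :
  inX m x -> hmap m T x = x -> exists w, f w = w /\ x = lift_state m w.
Proof.
move=> HX Hx.
have Hj : forall j, if tdnf_eval x (T j) then x j = m j else x j = 0.
  move=> j; have := congr1 (fun g : mstate n => g j) Hx; rewrite /= ffunE.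
  have := HX j; case: (tdnf_eval x (T j)); lia.
have Hext : forall k, (x k == 0) || (x k == m k).
  by move=> k; have := Hj k; case: (tdnf_eval x (T k)) => ->; rewrite eqxx ?orbT.
have Ex := lift_extreme hm Hext.
exists [ffun k => x k != 0]; split => //.
apply/ffunP => j; rewrite -(lift_eval hD hTD hT) -Ex ffunE.
have := Hj j; have := hm j; case: (tdnf_eval x (T j)) => Hm ->; rewrite ?eqxx //; apply/esym/eqP; lia.
Qed.

Lemma normalize (n : nat) (m : 'I_n -> nat) (hm : forall j, 0 < m j)
  (D : 'I_n -> dnf n) (T : 'I_n -> tdnf n) (hTD : forall j, forget (T j) = D j)
  (hnsi : forall j, 1 < m j -> ~ self_inhibited D j) (s : seq 'I_n) :
  forall x, inX m x -> (forall k, k \notin s -> (x k == 0) || (x k == m k)) ->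
  exists w, clos_refl_trans _ (mstep (hmap m T)) x (lift_state m w).
Proof.
elim: s => [|j s IH] x HX Hs.
  exists [ffun k => x k != 0]; rewrite -lift_extreme //; first exact: rt_refl.
  by move=> k; apply: Hs.
case Ht: (tdnf_eval x (T j)).
  have Hs' : forall k, k \notin s -> (setj x j (m j) k == 0) || (setj x j (m j) k == m k).
    move=> k Hk; rewrite setjE; case: (eqVneq k j) => [->|Nk]; first by rewrite eqxx orbT.
    by apply: Hs; rewrite inE negb_or Nk.
  have [w Hw] := IH (setj x j (m j)) (setj_inX HX (leqnn _)) Hs'.
  exists w; apply: (rt_trans _ _ _ _ _ _ Hw); exact: push_up.
have Hs' : forall k, k \notin s -> (setj x j 0 k == 0) || (setj x j 0 k == m k).
  move=> k Hk; rewrite setjE; case: (eqVneq k j) => [->|Nk]; first by rewrite eqxx.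
  by apply: Hs; rewrite inE negb_or Nk.
have [w Hw] := IH (setj x j 0) (setj_inX HX (leq0n _)) Hs'.
exists w; apply: (rt_trans _ _ _ _ _ _ Hw); apply: push_down => //; by rewrite Ht.
Qed.

Lemma simulate (n : nat) (f : bstate n -> bstate n) (m : 'I_n -> nat) (hm : forall j, 0 < m j)
  (D : 'I_n -> dnf n) (hD : forall j, shortest_dnf_of f j (D j))
  (T : 'I_n -> tdnf n) (hTD : forall j, forget (T j) = D j)
  (hT : thresholds_ok m T)
  (hnsi : forall j, 1 < m j -> ~ self_inhibited D j) w w' :
  clos_refl_trans _ (bstep f) w w' ->
  clos_refl_trans _ (mstep (hmap m T)) (lift_state m w) (lift_state m w').
Proof.
elim => [x y [i [Hi [Hy Ho]]]|x|x y z _ IH1 _ IH2]; last 2 first.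
- exact: rt_refl.
- exact: (rt_trans _ _ _ _ _ IH1 IH2).
have HL := lift_eval hD hTD hT x i.
case Hfi: (f x i) HL Hi Hy => HL Hi Hy.
  have -> : lift_state m y = setj (lift_state m x) i (m i).
    apply/ffunP => k; rewrite setjE !ffunE; case: eqP => [->|/eqP Nk]; last by rewrite Ho.
    rewrite Hy andbT /=; have := hm i; case: (ltnP 1 (m i)); lia.
  apply: push_up => //; exact: lift_inX.
have -> : lift_state m y = setj (lift_state m x) i 0.
  apply/ffunP => k; rewrite setjE !ffunE; case: eqP => [->|/eqP Nk]; last by rewrite Ho.
  by rewrite Hy andbF.
apply: push_down => //; [exact: lift_inX | by rewrite HL].
Qed.

Lemma breach (n : nat) (f : bstate n -> bstate n) (ws : seq (bstate n))
  (Hattr : forall A : bstate n -> Prop,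
        attractor (fun _ => True) (bstep f) A <->
        exists2 w, w \in ws & forall y, A y <-> y = w) :
  forall w, exists2 w0, w0 \in ws & clos_refl_trans _ (bstep f) w w0.
Proof.
pose rb u y : bool := if excluded_middle_informative (clos_refl_trans _ (bstep f) u y) then true else false.
have rbP : forall u y, rb u y <-> clos_refl_trans _ (bstep f) u y.
  move=> u y; rewrite /rb; case: excluded_middle_informative => //.
pose R u := [set y | rb u y].
suff H : forall k w, #|R w| <= k -> exists2 w0, w0 \in ws & clos_refl_trans _ (bstep f) w w0.
  by move=> w; exact: (H _ w (leqnn _)).
elim => [|k IH] w Hk.
  have : 0 < #|R w| by apply/card_gt0P; exists w; rewrite inE; apply/rbP/rt_refl.
  lia.
case: (classic (forall y, clos_refl_trans _ (bstep f) w y -> clos_refl_trans _ (bstep f) y w)) => Hc.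
  have Hatt : attractor (fun _ => True) (bstep f) (fun y => clos_refl_trans _ (bstep f) w y).
    split; first by exists w; exact: rt_refl.
    split => //; split.
      by move=> x y Hx Hy; exact: (rt_trans _ _ _ _ _ (Hc x Hx) Hy).
    by move=> x y Hx Hxy; exact: (rt_trans _ _ _ _ _ Hx Hxy).
  have [w0 Hw0 HA] := proj1 (Hattr _) Hatt.
  by exists w0 => //; apply/(HA w0).
have [y Hy] := not_all_ex_not _ _ Hc.
have [Hwy Hyw] := imply_to_and _ _ Hy.
have Hlt : #|R y| < #|R w|.
  apply: proper_card; apply/properP; split.
    apply/subsetP => z; rewrite !inE => /rbP Hz; apply/rbP.
    exact: (rt_trans _ _ _ _ _ Hwy Hz).
  exists w; rewrite inE; first by apply/rbP/rt_refl.
  by apply/negP => /rbP.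
have [w0 H1 H2] := IH y (ltac:(lia)).
exists w0 => //; exact: (rt_trans _ _ _ _ _ Hwy H2).
Qed.

Theorem proposition2 (n : nat) (hn : 1 <= n)
  (f : bstate n -> bstate n) (m : 'I_n -> nat) (hm : forall j, 0 < m j)
  (D : 'I_n -> dnf n) (hD : forall j, shortest_dnf_of f j (D j))
  (T : 'I_n -> tdnf n) (hTD : forall j, forget (T j) = D j)
  (hT : thresholds_ok m T)
  (hnsi : forall j, 1 < m j -> ~ self_inhibited D j) :
  let h := hmap m T in
  ((forall w : bstate n, f w = w -> inX m (lift_state m w) /\ h (lift_state m w) = lift_state m w)
   /\ (forall x : mstate n, inX m x -> h x = x ->
         exists w : bstate n, f w = w /\ x = lift_state m w))
  /\
  (forall ws : seq (bstate n),
     uniq ws -> (forall w, w \in ws -> f w = w) ->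
     (forall A : bstate n -> Prop,
        attractor (fun _ => True) (bstep f) A <->
        exists2 w, w \in ws & forall y, A y <-> y = w) ->
     forall A : mstate n -> Prop,
       attractor (inX m) (mstep h) A <->
       exists2 w, w \in ws & forall y, A y <-> y = lift_state m w).
Proof.
move=> h; rewrite /h.
split; first split.
- move=> w Hw; split; first exact: lift_inX.
  exact: fix_lift.
- move=> x HX Hx; exact: (fix_inv hm hD hTD hT HX Hx).
move=> ws Hu Hws Hattr A; split.
  case=> [[x Ax] [Hdom [Hsc Hcl]]].
  have HX := Hdom x Ax.
  have [w Hw] := normalize hm hTD hnsi (s := enum 'I_n) HX
     (fun k Hk => False_ind _ (negP Hk (mem_enum _ k))).
  have [w0 Hw0 Hr] := breach Hattr w.
  have Hr' := simulate hm hD hTD hT hnsi Hr.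
  have A0 := Hcl _ _ Ax (rt_trans _ _ _ _ _ Hw Hr').
  exists w0 => // y; split => [Ay|->//].
  have := Hsc _ _ A0 Ay.
  exact: fix_rt (fix_lift hm hD hTD hT (Hws _ Hw0)).
case=> w Hw HA; split.
  by exists (lift_state m w); apply/HA.
split; first by move=> x /HA ->; exact: lift_inX.
split; first by move=> x y /HA -> /HA ->; exact: rt_refl.
move=> x y /HA -> Hr; apply/HA.
exact: fix_rt (fix_lift hm hD hTD hT (Hws _ Hw)) Hr.
Qed.
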